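(* Let $\mathcal C\subseteq 2^{[n]}$ be a stable hyperplane code. Then $\mathcal C$ has no strong bitflip local obstructions; that is, there is no pair $(g,\tau)$ with $g\in(\mathbb Z_2)^n$ and $\tau\subseteq[n]$ such that $\tau\notin g\cdot\mathcal C$ and $\operatorname{link}_\tau\Delta(g\cdot\mathcal C)$ is not collapsible.
   Context: A code is a subset $\mathcal C\subseteq 2^{[n]}$, $[n]=\{1,\dots,n\}$. An oriented affine hyperplane in $\mathbb R^d$ is $H=\{x: w\cdot x-h=0\}$ with $w\in\mathbb R^d\setminus\{0\}$, $h\in\mathbb R$, and open half-spaces $H^+=\{x:w\cdot x-h>0\}$, $H^-=\{x:w\cdot x-h<0\}$. For hyperplanes $\mathcal H=\{H_1,\dots,H_n\}$ in $\mathbb R^d$ and an open convex set $X\subseteq\mathbb R^d$, the atom of $\sigma\subseteq[n]$ is $A_\sigma=\bigl(\bigcap_{i\in\sigma}(H_i^+\cap X)\bigr)\setminus\bigcup_{j\notin\sigma}H_j^+$ (for $\sigma=\emptyset$, $A_\emptyset=X\setminus\bigcup_{i}H_i^+$), and $\mathrm{code}(\mathcal H,X)=\{\sigma\subseteq[n]:A_\sigma\neq\emptyset\}$. The pair $(\mathcal H,X)$ is stable if $X$ is open and convex and for every $\sigma\subseteq[n]$ with $X\cap\bigcap_{i\in\sigma}H_i\neq\emptyset$, the affine subspace $\bigcap_{i\in\sigma}H_i$ has dimension $d-|\sigma|$. A stable hyperplane code is a code equal to $\mathrm{code}(\mathcal H,X)$ for some stable pair. The group $(\mathbb Z_2)^n$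 acts on $2^{[n]}$ by letting the generator $e_i$ send $\sigma$ to $\sigma\cup\{i\}$ if $i\notin\sigma$ and to $\sigma\setminus\{i\}$ if $i\in\sigma$; $g\cdot\mathcal C=\{g\cdot\sigma:\sigma\in\mathcal C\}$. $\Delta(\mathcal C)=\{\tau:\tau\subseteq\sigma\text{ for some }\sigma\in\mathcal C\}$. For a simplicial complex $\Delta$ and $\tau\subseteq$ its vertex set, $\operatorname{link}_\tau\Delta=\{\nu\in\Delta:\nu\cap\tau=\emptyset,\ \nu\cup\tau\in\Delta\}$ (the void complex $\{\}$ if $\tau\notin\Delta$). A free pair in $\Delta$ is $(\sigma,\tau)$ with $\tau$ a facet, $\sigma\subsetneq\tau$, and $\sigma$ contained in no other facet; the collapse along $\sigma$ replaces $\Delta$ by $\{\nu\in\Delta:\nu\not\supseteq\sigma\}$. $\Delta$ is collapsible if a finite sequence of collapses yields the void complex $\{\}$ (with no faces); in particular $\{\}$ is collapsible while $\{\emptyset\}$ is not. *)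

(* Defs.v *)
From HB Require Import structures.
From mathcomp Require Import all_boot all_order all_algebra.
From mathcomp Require Import all_classical all_reals all_analysis.
From mathcomp Require Import Rstruct Rstruct_topology.
Set Implicit Arguments. Unset Strict Implicit. Unset Printing Implicit Defensive.
Import Order.TTheory GRing.Theory Num.Theory numFieldNormedType.Exports.
Local Open Scope ring_scope.
Local Open Scope classical_set_scope.

Definition dotv (R : realType) (d : nat) (w x : 'rV[R]_d) : R :=
  \sum_(k < d) w 0 k * x 0 k.

Record hyperplane (R : realType) (d : nat) := Hyperplane {
  hp_w : 'rV[R]_d;
  hp_h : R;
  hp_w_neq0 : hp_w != 0 }.

Definition hp_set (R : realType) (d : nat) (H : hyperplane R d) : set 'rV[R]_d :=
  [set x | dotv (hp_w H) x - hp_h H = 0].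
Definition hp_pos (R : realType) (d : nat) (H : hyperplane R d) : set 'rV[R]_d :=
  [set x | dotv (hp_w H) x - hp_h H > 0].

Definition convex_open (R : realType) (d : nat) (X : set 'rV[R]_d) : Prop :=
  open X /\
  (forall x y t, X x -> X y -> 0 <= t -> t <= 1 -> X ((1 - t) *: x + t *: y)).

(* Dimension of the affine hull of a nonempty set S is k: there are k+1
   affinely independent points of S, and never more. *)
Definition affine_dim (R : realType) (d : nat) (S : set 'rV[R]_d) (k : nat) : Prop :=
  (exists (p : 'rV[R]_d) (M : 'M[R]_(k, d)),
      S p /\ row_free M /\ forall j, S (p + row j M)) /\
  (forall (m : nat) (p : 'rV[R]_d) (M : 'M[R]_(m, d)),
      S p -> row_free M -> (forall j, S (p + row j M)) -> (m <= k)%N).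

Definition atom (R : realType) (d n : nat) (H : 'I_n -> hyperplane R d)
  (X : set 'rV[R]_d) (s : {set 'I_n}) : set 'rV[R]_d :=
  [set x | X x /\ (forall i, i \in s -> hp_pos (H i) x)
               /\ (forall j, j \notin s -> ~ hp_pos (H j) x)].

Definition is_code_of (R : realType) (d n : nat) (H : 'I_n -> hyperplane R d)
  (X : set 'rV[R]_d) (C : {set {set 'I_n}}) : Prop :=
  forall s, s \in C <-> atom H X s !=set0.

Definition stable_pair (R : realType) (d n : nat) (H : 'I_n -> hyperplane R d)
  (X : set 'rV[R]_d) : Prop :=
  convex_open X /\
  forall s : {set 'I_n},
    let I := [set x | forall i, i \in s -> hp_set (H i) x] in
    X `&` I !=set0 -> affine_dim I (d - #|s|)%N /\ (#|s| <= d)%N.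

Definition stable_hyperplane_code (n : nat) (C : {set {set 'I_n}}) : Prop :=
  exists (d : nat) (H : 'I_n -> hyperplane Rdefinitions.R d)
         (X : set 'rV[Rdefinitions.R]_d),
    stable_pair H X /\ is_code_of H X C.

Local Close Scope classical_set_scope.
(* The group (Z_2)^n is represented by subsets g of [n] (g = sum of e_i, i in g);
   its action on a codeword is the symmetric difference. *)
Definition flip (n : nat) (g s : {set 'I_n}) : {set 'I_n} :=
  (s :\: g) :|: (g :\: s).
Definition flip_code (n : nat) (g : {set 'I_n}) (C : {set {set 'I_n}}) :=
  [set flip g s | s in C].

Definition Delta (n : nat) (C : {set {set 'I_n}}) : {set {set 'I_n}} :=
  [set t : {set 'I_n} | [exists s in C, t \subset s]].

Definition link (n : nat) (t : {set 'I_n}) (D : {set {set 'I_n}}) :=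
  [set v in D | [disjoint v & t] && ((v :|: t) \in D)].

Definition facet (n : nat) (D : {set {set 'I_n}}) (t : {set 'I_n}) : bool :=
  (t \in D) && [forall v in D, ~~ (t \proper v)].

Definition free_pair (n : nat) (D : {set {set 'I_n}}) (s t : {set 'I_n}) : bool :=
  [&& facet D t, s \proper t &
      [forall u, (facet D u && (s \subset u)) ==> (u == t)]].

Definition collapse (n : nat) (D : {set {set 'I_n}}) (s : {set 'I_n}) :=
  [set v in D | ~~ (s \subset v)].

Inductive collapsible (n : nat) : {set {set 'I_n}} -> Prop :=
| collapsible_void : collapsible (finset.set0 : {set {set 'I_n}})
| collapsible_step D s t :
    free_pair D s t -> collapsible (collapse D s) -> collapsible D.

(* Main.v *)
Require Import Defs.
From mathcomp Require Import all_boot all_order all_algebra.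
From mathcomp Require Import all_classical all_reals all_analysis.
From mathcomp Require Import Rstruct Rstruct_topology.
From mathcomp Require Import ring lra zify.
Import mathcomp.boot.fintype mathcomp.boot.finset.
Set Implicit Arguments. Unset Strict Implicit. Unset Printing Implicit Defensive.
Import Order.TTheory GRing.Theory Num.Theory numFieldNormedType.Exports.

Section Comb.
Variable n : nat.
Implicit Types (D E L : {set {set 'I_n}}) (s t u v w : {set 'I_n}).

Definition J (j : 'I_n) L := [set j |: v | v in L].

Lemma setU1_subset j u v : j \notin u -> j \notin v ->
  (j |: u \subset j |: v) = (u \subset v).
Proof.
move=> ju jv; apply/idP/idP => H.
  apply/subsetP => x xu; have: x \in j |: v by apply: (subsetP H); rewrite inE xu orbT.
  rewrite !inE => /orP[/eqP xj|//]; by move: ju; rewrite -xj xu.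
by apply: setUS.
Qed.

Lemma setU1_subsetr j u v : j \notin u -> (u \subset j |: v) = (u \subset v).
Proof.
move=> ju; apply/idP/idP => H; last by apply: (subset_trans H); apply: subsetUr.
apply/subsetP => x xu; have: x \in j |: v by apply: (subsetP H).
rewrite !inE => /orP[/eqP xj|//]; by move: ju; rewrite -xj xu.
Qed.

Lemma setU1_inj j u v : j \notin u -> j \notin v -> (j |: u == j |: v) = (u == v).
Proof.
move=> ju jv; apply/eqP/eqP => [H|->//].
by rewrite -(setU1K ju) -(setU1K jv) H.
Qed.

Lemma setU1_proper j u v : j \notin u -> j \notin v ->
  (j |: u \proper j |: v) = (u \proper v).
Proof.
move=> ju jv; rewrite !properEneq setU1_subset // setU1_inj //.
Qed.


Lemma inJP j L w : (forall v, v \in L -> j \notin v) ->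
  reflect (j \in w /\ w :\ j \in L) (w \in J j L).
Proof.
move=> HL; apply: (iffP imsetP) => [[v vL ->]|[jw wL]].
  by rewrite setU11 setU1K ?HL.
by exists (w :\ j) => //; rewrite setD1K.
Qed.

Lemma lift_collapsible j : forall L, collapsible L -> (forall v, v \in L -> j \notin v) ->
  forall E, collapsible E -> (forall v, v \in E -> j \notin v) ->
  collapsible (E :|: J j L).
Proof.
move=> L0 cL; elim: cL => [|L s t fp _ IH] HL E cE HE.
  suff -> : J j set0 = set0 by rewrite setU0.
  by apply/setP => w; rewrite inE; apply/imsetP => -[v]; rewrite inE.
have cLsub : forall v, v \in collapse L s -> v \in L by move=> v; rewrite inE => /andP[].
move: (fp) => /and3P[/andP[tL tfac] st /forallP suniq].
have jt : j \notin t by apply: HL.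
have js : j \notin s.
  by apply/negP => js; move/negP: jt; apply; apply: (subsetP (proper_sub st)).
have memD : forall w, w \in E :|: J j L -> 
   (w \in E /\ j \notin w) \/ (exists2 u, u \in L & w = j |: u).
  move=> w; rewrite inE => /orP[wE|/imsetP[u uL ->]]; first by left; split=> //; apply: HE.
  by right; exists u.
apply: (@collapsible_step _ _ (j |: s) (j |: t)).
  apply/and3P; split.
  - apply/andP; split; first by rewrite inE; apply/orP; right; apply/imsetP; exists t.
    apply/forallP => w; apply/implyP => wD; case: (memD w wD) => [[_ jw]|[u uL ->]].
      apply/negP => /proper_sub /subsetP /(_ j); rewrite setU11 => /(_ isT).
      by rewrite (negbTE jw).
    rewrite setU1_proper ?HL //.
    by move/forallP: tfac => /(_ u); rewrite uL.
  - by rewrite setU1_proper.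
  - apply/forallP => w; apply/implyP => /andP[/andP[wD /forallP wfac] sw].
    case: (memD w wD) => [[_ jw]|[u uL wu]].
      by move/subsetP: sw => /(_ j); rewrite setU11 (negbTE jw) => /(_ isT).
    subst w; rewrite setU1_inj ?HL //.
    apply: (implyP (suniq u)); apply/andP; split; last first.
      by rewrite -(setU1_subset js (HL _ uL)).
    apply/andP; split => //; apply/forallP => v; apply/implyP => vL.
    have := wfac (j |: v); rewrite inE; have -> : j |: v \in J j L by apply/imsetP; exists v.
    by rewrite orbT /= setU1_proper ?HL.
have -> : collapse (E :|: J j L) (j |: s) = E :|: J j (collapse L s).
  apply/setP => w; rewrite !inE; apply/idP/idP.
    move=> /andP[wD nsw]; have := memD w; rewrite inE wD => /(_ isT) [[wE _]|[u uL wu]]; first by rewrite wE.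
    subst w; apply/orP; right; apply/imsetP; exists u => //; rewrite inE uL /=.
    by rewrite -(setU1_subset js (HL _ uL)).
  move=> /orP[wE|/imsetP[u]].
    rewrite wE /=; apply/negP => /subsetP /(_ j); rewrite setU11 => /(_ isT).
    by rewrite (negbTE (HE _ wE)).
  rewrite inE => /andP[uL nsu] ->; rewrite (setU1_subset js (HL _ uL)) nsu andbT.
  by apply/orP; right; apply/imsetP; exists u.
apply: IH => // v vL; apply: HL; exact: cLsub.
Qed.

Lemma cone_collapsible j : forall L, (forall v, v \in L -> j \notin v) ->
  collapsible (L :|: J j L).
Proof.
move=> L; move: {2}#|L| (leqnn #|L|) => k; elim: k L => [|k IHk] L.
  rewrite leqn0 cards_eq0 => /eqP -> _.
  suff -> : J j set0 = set0 by rewrite setU0; constructor.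
  by apply/setP => w; rewrite inE; apply/imsetP => -[v]; rewrite inE.
move=> cardL HL.
case: (set_0Vmem L) => [->|[t0 t0L]].
  suff -> : J j set0 = set0 by rewrite setU0; constructor.
  by apply/setP => w; rewrite inE; apply/imsetP => -[v]; rewrite inE.
pose t := [arg max_(t > t0 in L) #|t|].
have [tL tmax] : t \in L /\ forall u, u \in L -> #|u| <= #|t|.
  by rewrite /t; case: arg_maxnP.
have jt : j \notin t by apply: HL.
have tsub : forall u, u \in L -> t \subset u -> u = t.
  move=> u uL tu; apply/eqP; rewrite eq_sym eqEcard tu /=; exact: tmax.
have memD : forall w, w \in L :|: J j L -> 
   (w \in L /\ j \notin w) \/ (exists2 u, u \in L & w = j |: u).
  move=> w; rewrite inE => /orP[wE|/imsetP[u uL ->]]; first by left; split=> //; apply: HL.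
  by right; exists u.
have tJ : j |: t \in L :|: J j L by rewrite inE; apply/orP; right; apply/imsetP; exists t.
apply: (@collapsible_step _ _ t (j |: t)).
  apply/and3P; split.
  - apply/andP; split => //.
    apply/forallP => w; apply/implyP => wD; case: (memD w wD) => [[_ jw]|[u uL ->]].
      apply/negP => /proper_sub /subsetP /(_ j); rewrite setU11 => /(_ isT).
      by rewrite (negbTE jw).
    rewrite setU1_proper ?HL //; apply/negP => tu.
    by move: (tu); rewrite (tsub _ uL (proper_sub tu)) properxx.
  - rewrite properEneq subsetUr andbT; apply/negP => /eqP tt.
    by move: jt; rewrite {1}tt setU11.
  - apply/forallP => w; apply/implyP => /andP[/andP[wD /forallP wfac] sw].
    case: (memD w wD) => [[wL jw]|[u uL wu]].
      have wt := tsub _ wL sw; subst w.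
      by move: (wfac (j |: t)); rewrite tJ properEneq subsetUr andbT /= => /negP; 
        case; apply/negP => /eqP tt; move: jt; rewrite {1}tt setU11.
    subst w; rewrite setU1_inj ?HL //; apply/eqP; apply: tsub => //.
    by rewrite -(setU1_subsetr _ jt).
have -> : collapse (L :|: J j L) t = (L :\ t) :|: J j (L :\ t).
  apply/setP => w; rewrite !inE; apply/idP/idP.
    move=> /andP[wD ntw]; have := memD w; rewrite inE wD => /(_ isT) [[wL _]|[u uL wu]].
      rewrite wL andbT; apply/orP; left; apply/negP => /eqP wt; subst w.
      by rewrite subxx in ntw.
    subst w; apply/orP; right; apply/imsetP; exists u => //; rewrite !inE uL andbT.
    apply/negP => /eqP ut; subst u; by rewrite subsetUr in ntw.
  move=> /orP[/andP[wt wL]|/imsetP[u]].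
    rewrite wL /=; apply/negP => tw; by rewrite (tsub _ wL tw) eqxx in wt.
  rewrite !inE => /andP[ut uL] ->; rewrite (setU1_subsetr _ jt).
  have -> : (j |: u \in J j L) by apply/imsetP; exists u.
  rewrite orbT /=; apply/negP => tu; by rewrite (tsub _ uL tu) eqxx in ut.
apply: IHk.
  by rewrite -ltnS (leq_trans _ cardL) // (cardsD1 t L) tL.
by move=> v; rewrite !inE => /andP[_ /HL].
Qed.

Lemma powerset_collapsible (S : {set 'I_n}) : S != set0 ->
  collapsible (powerset S).
Proof.
case/set0Pn => j jS.
have -> : powerset S = powerset (S :\ j) :|: J j (powerset (S :\ j)).
  apply/setP => w; rewrite !inE; apply/idP/idP.
    move=> wS; case jw: (j \in w).
      apply/orP; right; apply/imsetP; exists (w :\ j); last by rewrite setD1K.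
      by rewrite inE; apply: setSD.
    apply/orP; left; apply/subsetP => x xw; rewrite !inE (subsetP wS) // andbT.
    by apply/negP => /eqP xj; subst x; rewrite xw in jw.
  move=> /orP[H|/imsetP[u]]; first by apply: (subset_trans H); apply: subsetDl.
  rewrite inE => uS ->; apply/subsetP => x; rewrite !inE => /orP[/eqP ->//|xu].
  by move: (subsetP uS x xu); rewrite inE => /andP[].
apply: cone_collapsible => v; rewrite inE => vS; apply/negP => jv.
by move: (subsetP vS j jv); rewrite !inE eqxx.
Qed.
End Comb.

Local Open Scope ring_scope.
Section Geo.
Variable R : realFieldType.
Variable V : lmodType R.

Definition convexP (Y : V -> Prop) := forall x y (t : R), Y x -> Y y -> 0 <= t -> t <= 1 ->
  Y ((1-t)*:x + t*:y).
Definition affineP (f : V -> R) := forall x y (t : R), f ((1-t)*:x + t*:y) = (1-t) * f x + t * f y.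

Lemma small_eps (I : finType) (S : {set I}) (a c : I -> R) :
  (forall i, i \in S -> 0 < a i) -> (forall i, i \in S -> 0 <= c i) ->
  exists e : R, [/\ 0 < e, e <= 1 & forall i, i \in S -> e * c i < a i].
Proof.
move=> ha hc; pose T := \sum_(i in S) c i / a i.
have T0 : 0 <= T by apply: sumr_ge0 => i iS; apply: divr_ge0; [apply: hc|apply: ltW; apply: ha].
exists (1 + T)^-1; split.
- by rewrite invr_gt0; lra.
- by rewrite invf_le1; lra.
move=> i iS; have ai := ha i iS; have ci := hc i iS.
have hT : c i / a i <= T.
  rewrite /T (bigD1 i) //= lerDl; apply: sumr_ge0 => k /andP[kS _].
  by apply: divr_ge0; [apply: hc|apply: ltW; apply: ha].
have hc' : c i <= T * a i by rewrite -ler_pdivrMr.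
have e0 : 0 < (1 + T)^-1 by rewrite invr_gt0; lra.
have e1 : (1 + T)^-1 * (1 + T) = 1 by rewrite mulVf //; lra.
nra.
Qed.


Variable I : finType.

Lemma kkm (F : I -> V -> R) : (forall i, affineP (F i)) ->
  forall (S : {set I}) (Y : V -> Prop), convexP Y ->
  (forall y, Y y -> exists2 i, i \in S & 0 < F i y) ->
  (forall j, j \in S -> exists x, [/\ Y x, 0 < F j x & forall i, i \in S -> i != j -> F i x <= 0]) ->
  S != set0 -> exists y, Y y /\ forall i, i \in S -> 0 < F i y.
Proof.
move=> Faff S; move: {2}#|S| (leqnn #|S|) => k; elim: k S => [|k IHk] S.
  by rewrite leqn0 cards_eq0 => ->.
move=> cardS Y Yconv cover priv /set0Pn [p pS].
have [xp [Yxp Fpxp xppriv]] := priv p pS.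
case: (boolP (S :\ p == set0)) => [/eqP Sp|Spne].
  exists xp; split => // i iS; case: (eqVneq i p) => [->//|ip].
  have : i \in S :\ p by rewrite !inE ip iS.
  by rewrite Sp inE.
pose Y0 := fun y => Y y /\ F p y = 0.
have Y0conv : convexP Y0.
  move=> x y t [Yx Fx] [Yy Fy] t0 t1; split; first exact: Yconv.
  by rewrite Faff Fx Fy !mulr0 addr0.
have cover0 : forall y, Y0 y -> exists2 i, i \in S :\ p & 0 < F i y.
  move=> y [Yy Fy]; have [i iS Fi] := cover y Yy; exists i => //.
  rewrite !inE iS andbT; apply/negP => /eqP ip; subst i; by rewrite Fy ltxx in Fi.
have priv0 : forall j, j \in S :\ p -> exists x, [/\ Y0 x, 0 < F j x &
     forall i, i \in S :\ p -> i != j -> F i x <= 0].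
  move=> j; rewrite !inE => /andP[jp jS].
  have [xj [Yxj Fjxj xjpriv]] := priv j jS.
  set a := F p xj; set b := F p xp in Fpxp *.
  have a0 : a <= 0 by apply: xjpriv => //; rewrite eq_sym.
  have ab : a - b != 0 by apply/negP => /eqP h; lra.
  pose s := a / (a - b).
  have sab : s * (a - b) = a by rewrite /s mulfVK.
  have s0 : 0 <= s by nra.
  have s1 : s <= 1 by nra.
  pose x' := (1 - s) *: xj + s *: xp.
  have Yx' : Y x' by apply: Yconv.
  have Fpx' : F p x' = 0 by rewrite /x' Faff -/a -/b; nra.
  have other : forall i, i \in S :\ p -> i != j -> F i x' <= 0.
    move=> i; rewrite !inE => /andP[ip iS] ij; rewrite /x' Faff.
    have h1 := xjpriv i iS ij; have h2 := xppriv i iS ip; nra.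
  exists x'; split => //.
  have [i iS Fi] := cover x' Yx'.
  case: (eqVneq i j) => [<-//|ij].
  case: (eqVneq i p) => [ip|ip]; first by subst i; rewrite Fpx' ltxx in Fi.
  have := other i; rewrite !inE ip iS => /(_ isT ij); lra.
have cardS' : (#|S :\ p| <= k)%N by rewrite -ltnS (leq_trans _ cardS) // (cardsD1 p S) pS.
have [y0 [[Yy0 Fpy0] Fy0]] := IHk (S :\ p) cardS' Y0 Y0conv cover0 priv0 Spne.
have hc : forall i, i \in S :\ p -> 0 <= F i y0 - F i xp.
  move=> i; rewrite !inE => /andP[ip iS]; have := xppriv i iS ip; have := Fy0 i; 
  rewrite !inE ip iS => /(_ isT); lra.
have [e [e0 e1 he]] := small_eps (c := fun i => F i y0 - F i xp) Fy0 hc.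
exists ((1 - e) *: y0 + e *: xp); split; first by apply: Yconv => //; lra.
move=> i iS; rewrite Faff; case: (eqVneq i p) => [->|ip].
  by rewrite Fpy0; nra.
have iS' : i \in S :\ p by rewrite !inE ip iS.
have := he i iS'; lra.
Qed.
End Geo.

Section Nerve.
Variable R : realFieldType.
Variable V : lmodType R.
Variable n : nat.

Definition hnerve (Y : V -> Prop) (F : 'I_n -> V -> R) (S : {set 'I_n}) : {set {set 'I_n}} :=
  [set v : {set 'I_n} | (v \subset S) && `[< exists y, Y y /\ forall i, i \in v -> 0 < F i y >]].

Lemma conv_pos (a b t : R) : 0 < a -> 0 < b -> 0 <= t -> t <= 1 -> 0 < (1 - t) * a + t * b.
Proof.
move=> a0 b0 t0 t1; case: (eqVneq t 0) => [->|tn0]; first by rewrite subr0 mul1r mul0r addr0.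
have tp : 0 < t by rewrite lt0r tn0.
nra.
Qed.

Lemma hnerve_collapsible (F : 'I_n -> V -> R) : (forall i, affineP (F i)) ->
  forall (S : {set 'I_n}) (Y : V -> Prop), convexP Y ->
  (forall y, Y y -> exists2 i, i \in S & 0 < F i y) ->
  collapsible (hnerve Y F S).
Proof.
move=> Faff S; move: {2}#|S| (leqnn #|S|) => k; elim: k S => [|k IHk] S.
  rewrite leqn0 cards_eq0 => /eqP -> Y _ cover.
  suff -> : hnerve Y F set0 = set0 by constructor.
  apply/setP => v; rewrite !inE; apply/negP => /andP[_ /asboolP [y [Yy _]]].
  by have [i] := cover y Yy; rewrite inE.
move=> cardS Y Yconv cover.
case: (pselect (exists2 j, j \in S & forall y, Y y -> 0 < F j y -> exists2 i, i \in S :\ j & 0 < F i y)).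
  move=> [j jS noprv].
  have cardS' : (#|S :\ j| <= k)%N by rewrite -ltnS (leq_trans _ cardS) // (cardsD1 j S) jS.
  pose Y' := fun y => Y y /\ 0 < F j y.
  have Y'conv : convexP Y'.
    move=> x y t [Yx Fx] [Yy Fy] t0 t1; split; first exact: Yconv.
    by rewrite Faff; apply: conv_pos.
  have HE : forall v, v \in hnerve Y F (S :\ j) -> j \notin v.
    move=> v; rewrite inE => /andP[/subsetP vS _]; apply/negP => /vS; by rewrite !inE eqxx.
  have HL : forall v, v \in hnerve Y' F (S :\ j) -> j \notin v.
    move=> v; rewrite inE => /andP[/subsetP vS _]; apply/negP => /vS; by rewrite !inE eqxx.
  have -> : hnerve Y F S = hnerve Y F (S :\ j) :|: J j (hnerve Y' F (S :\ j)).
    apply/setP => w; rewrite !inE; apply/idP/idP.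
      move=> /andP[wS /asboolP [y [Yy Fw]]].
      case jw: (j \in w).
        apply/orP; right; apply/imsetP; exists (w :\ j); last by rewrite setD1K.
        rewrite inE setSD //=; apply/asboolP; exists y; split.
          by split => //; apply: Fw.
        by move=> i; rewrite inE => /andP[_ /Fw].
      apply/orP; left; apply/andP; split; last by apply/asboolP; exists y.
      apply/subsetP => x xw; rewrite !inE (subsetP wS) // andbT.
      by apply/negP => /eqP xj; subst x; rewrite xw in jw.
    move=> /orP[/andP[wS /asboolP [y [Yy Fw]]]|/imsetP[u]].
      rewrite (subset_trans wS (subsetDl _ _)) /=; apply/asboolP; by exists y.
    rewrite inE => /andP[uS /asboolP [y [[Yy Fjy] Fu]]] ->.
    apply/andP; split.
      apply/subsetP => x; rewrite !inE => /orP[/eqP ->//|xu].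
      by move: (subsetP uS x xu); rewrite inE => /andP[].
    apply/asboolP; exists y; split => // i; rewrite !inE => /orP[/eqP ->//|/Fu//].
  apply: lift_collapsible => //.
    apply: IHk => // y [Yy Fjy]; exact: noprv.
  apply: IHk => // y Yy; have [i iS Fi] := cover y Yy.
  case: (eqVneq i j) => [eij|nij]; first by subst i; apply: noprv.
  by exists i => //; rewrite !inE nij.
move=> nex.
case: (boolP (S == set0)) => [/eqP S0|Sne].
  suff -> : hnerve Y F S = set0 by constructor.
  apply/setP => v; rewrite !inE; apply/negP => /andP[_ /asboolP [y [Yy _]]].
  by have [i] := cover y Yy; rewrite S0 inE.
have priv : forall j, j \in S -> exists x, [/\ Y x, 0 < F j x & forall i, i \in S -> i != j -> F i x <= 0].
  move=> j jS; apply: contrapT => nx; apply: nex; exists j => // y Yy Fj.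
  apply: contrapT => ni; apply: nx; exists y; split => // i iS ij.
  rewrite leNgt; apply/negP => Fi; apply: ni; exists i => //; by rewrite !inE ij.
have [y [Yy Fy]] := kkm Faff Yconv cover priv Sne.
have -> : hnerve Y F S = powerset S.
  apply/setP => v; rewrite !inE; apply/andP/idP => [[]//|vS]; split => //.
  apply/asboolP; exists y; split => // i iv; apply: Fy; exact: (subsetP vS).
exact: powerset_collapsible.
Qed.
End Nerve.

Section Pert.
Variable K : realType.
Variable d n : nat.
Variable H : 'I_n -> hyperplane K d.

Definition fv i (x : 'rV[K]_d) := dotv (hp_w (H i)) x - hp_h (H i).

Lemma dotvDZ (w x u : 'rV[K]_d) (e : K) : dotv w (x + e *: u) = dotv w x + e * dotv w u.
Proof.
rewrite /dotv mulr_sumr -big_split /=; apply: eq_bigr => k _; rewrite !mxE; ring.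
Qed.

Lemma open_ball (X : set 'rV[K]_d) x : open X -> X x ->
  exists2 r : K, 0 < r & forall y, `|x - y| < r -> X y.
Proof.
move=> Xo Xx; have := Xo x Xx; move=> /nbhs_ballP [r r0 hr]; exists r => // y hy.
apply: hr; rewrite mx_norm_ball /ball_ /=; exact: hy.
Qed.


Lemma dotvD (w x z : 'rV[K]_d) : dotv w (x + z) = dotv w x + dotv w z.
Proof. by rewrite /dotv -big_split /=; apply: eq_bigr => k _; rewrite !mxE mulrDr. Qed.

Lemma solve_active (X : set 'rV[K]_d) x (e : 'I_n -> K) : stable_pair H X -> X x ->
  exists u, forall i, fv i x = 0 -> dotv (hp_w (H i)) u = e i.
Proof.
move=> [_ Hst] Xx.
pose A := [set i | fv i x == 0].
have hA : ((X `&` [set z | forall i, i \in A -> hp_set (H i) z]) !=set0)%classic.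
  by exists x; split => // i; rewrite inE => /eqP.
have [[_ maxd] kd] := Hst A hA.
pose k := #|A|.
pose W : 'M[K]_(k, d) := \matrix_(r, c) hp_w (H (enum_val r)) 0 c.
pose Wt := W^T.
have key : forall (z : 'rV_d), (z <= kermx Wt)%MS -> forall i, i \in A -> dotv (hp_w (H i)) z = 0.
  move=> z /sub_kermxP zW i iA; have := congr1 (fun M : 'rV[K]_k => M 0 (enum_rank_in iA i)) zW.
  rewrite !mxE => <-; rewrite /dotv; apply: eq_bigr => c _; rewrite !mxE enum_rankK_in // mulrC //.
have rk : (\rank (kermx Wt) <= d - k)%N.
  apply: (maxd _ x (row_base (kermx Wt))).
  - by move=> /= i0; rewrite inE => /eqP.
  - exact: row_base_free.
  - move=> j /= i1 iA; rewrite /hp_set /= dotvD.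
    have -> : dotv (hp_w (H i1)) (row j (row_base (kermx Wt))) = 0.
      apply: key => //; apply: submx_trans (row_sub j _) _; rewrite eq_row_base; exact: submx_refl.
    by rewrite addr0; move: iA; rewrite inE => /eqP.
rewrite mxrank_ker in rk.
have fullW : row_full Wt.
  rewrite /row_full; have := rank_leq_col Wt; move: rk kd; rewrite -/k => rk kd rc.
  apply/eqP; lia.
pose b : 'rV_k := \row_r e (enum_val r).
have hu := mulmxKpV (submx_full b fullW).
move: (b *m pinvmx Wt) hu => u hu; exists u => i fi.
have iA : i \in A by rewrite inE; apply/eqP.
have := congr1 (fun M : 'rV[K]_k => M 0 (enum_rank_in iA i)) hu.
rewrite !mxE enum_rankK_in // => <-; rewrite /dotv; apply: eq_bigr => c _.
by rewrite !mxE enum_rankK_in // mulrC //.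
Qed.

Lemma small_eps' (I : finType) (S : {set I}) (a c : I -> K) :
  (forall i, i \in S -> 0 < a i) -> (forall i, i \in S -> 0 <= c i) ->
  exists e : K, [/\ 0 < e, e <= 1 & forall i, i \in S -> e * c i < a i].
Proof.
move=> ha hc; pose T := \sum_(i in S) c i / a i.
have T0 : 0 <= T by apply: sumr_ge0 => i iS; apply: divr_ge0; [apply: hc|apply: ltW; apply: ha].
exists (1 + T)^-1; split.
- by rewrite invr_gt0; lra.
- by rewrite invf_le1; lra.
move=> i iS; have ai := ha i iS; have ci := hc i iS.
have hT : c i / a i <= T.
  rewrite /T (bigD1 i) //= lerDl; apply: sumr_ge0 => k /andP[kS _].
  by apply: divr_ge0; [apply: hc|apply: ltW; apply: ha].
have hc' : c i <= T * a i by rewrite -ler_pdivrMr.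
have e0 : 0 < (1 + T)^-1 by rewrite invr_gt0; lra.
have e1 : (1 + T)^-1 * (1 + T) = 1 by rewrite mulVf //; lra.
nra.
Qed.

Lemma sign_keep (a c e : K) : a != 0 -> 0 <= e -> e * `|c| < `|a| -> 0 < a * (a + e * c).
Proof.
move=> a0 e0 h; have h1 := ler_norm c; have h2 : - c <= `|c| by rewrite -normrN ler_norm.
have h3 : 0 <= e * (`|c| - c) by apply: mulr_ge0 => //; lra.
have h4 : 0 <= e * (`|c| + c) by apply: mulr_ge0 => //; lra.
case: (ltrgt0P a) => [ap|an|/eqP]; last by rewrite (negbTE a0).
  rewrite (gtr0_norm ap) in h; have hh : 0 < a + e * c by nra.
  exact: (mulr_gt0 ap hh).
rewrite (ltr0_norm an) in h; have hh : a + e * c < 0 by nra.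
have := mulr_gt0 (x := - a) (y := - (a + e * c)); rewrite mulrNN; apply; lra.
Qed.

Lemma perturb (X : set 'rV[K]_d) x (e : 'I_n -> K) : stable_pair H X -> X x ->
  (forall i, e i != 0) ->
  exists x', X x' /\ forall i, (fv i x != 0 -> 0 < fv i x * fv i x') /\
                               (fv i x = 0 -> 0 < e i * fv i x').
Proof.
move=> st Xx e0; have [u hu] := solve_active e st Xx.
have [r r0 hr] := open_ball st.1.1 Xx.
pose NA := [set i | fv i x != 0].
have ha : forall i, i \in NA -> 0 < `|fv i x| by move=> i; rewrite inE normr_gt0.
have [e1 [e1p e11 he1]] := small_eps' (c := fun i => `|dotv (hp_w (H i)) u|) ha
  (fun i _ => normr_ge0 _).
pose eps := Num.min e1 (r / (`|u| + 1)).
have u0 : 0 <= `|u| := normr_ge0 u.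
have r1 : 0 < r / (`|u| + 1) by apply: divr_gt0 => //; lra.
have epsp : 0 < eps by rewrite lt_min e1p r1.
have epse1 : eps <= e1 by rewrite ge_min lexx.
have epsr : eps <= r / (`|u| + 1) by rewrite ge_min lexx orbT.
exists (x + eps *: u); split.
  apply: hr; rewrite opprD addrA subrr add0r normrN mx_normZ gtr0_norm //.
  have : r / (`|u| + 1) * `|u| < r.
    have ht : r / (`|u| + 1) * (`|u| + 1) = r by rewrite mulfVK //; apply/negP => /eqP; lra.
    nra.
  have : eps * `|u| <= r / (`|u| + 1) * `|u| by apply: ler_wpM2r.
  lra.
move=> i; have fe : fv i (x + eps *: u) = fv i x + eps * dotv (hp_w (H i)) u.
  by rewrite /fv dotvDZ; ring.
rewrite fe; split => [fi|fi].
  apply: sign_keep => //; first exact: ltW.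
  apply: le_lt_trans (he1 i _); last by rewrite inE.
  by apply: ler_wpM2r => //.
rewrite fi add0r hu // mulrCA; apply: mulr_gt0 => //.
by rewrite -expr2 exprn_even_gt0 //= e0 orbT.
Qed.
End Pert.

Section Final.
Variable K : realType.

Lemma dotv_aff d (w x y : 'rV[K]_d) (t : K) :
  dotv w ((1 - t) *: x + t *: y) = (1 - t) * dotv w x + t * dotv w y.
Proof.
rewrite /dotv !mulr_sumr -big_split /=; apply: eq_bigr => k _; rewrite !mxE; ring.
Qed.

Lemma in_flip n (g s : {set 'I_n}) i : (i \in Defs.flip g s) = ((i \in s) != (i \in g)).
Proof. by rewrite /Defs.flip !inE; case: (i \in s); case: (i \in g). Qed.

Definition sgb (b : bool) : K := if b then -1 else 1.

Lemma fkey (b : bool) (f : K) : f != 0 -> ((0 < f) != b) = (0 < sgb b * f).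
Proof.
rewrite /sgb; case: b; rewrite ?mul1r ?mulN1r ?oppr_gt0; move: f => f; case: ltrgtP => //.
Qed.

Lemma fkey2 (b : bool) (f : K) : 0 < sgb b * f -> ((0 < f) != b).
Proof.
move=> h; rewrite fkey //; apply/negP => /eqP f0; by rewrite f0 mulr0 ltxx in h.
Qed.

Lemma sgb_prod (b : bool) (f f' : K) : 0 < f * f' -> 0 < sgb b * f -> 0 < sgb b * f'.
Proof. rewrite /sgb; case: b => h1 h2; nra. Qed.

Lemma sgb_prod_neg (b : bool) (f f' : K) : 0 < f * f' -> sgb b * f < 0 -> sgb b * f' < 0.
Proof. rewrite /sgb; case: b => h1 h2; nra. Qed.

Lemma sgb_neq0 b : sgb b != 0.
Proof. by rewrite /sgb; case: b; rewrite ?oppr_eq0 oner_eq0. Qed.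

End Final.

Theorem theoremA (n : nat) (C : {set {set 'I_n}}) :
  stable_hyperplane_code C ->
  ~ exists (g tau : {set 'I_n}),
      tau \notin flip_code g C /\ ~ collapsible (link tau (Delta (flip_code g C))).
Proof.
move=> [d [H [X [st code]]]] [g [tau [Htau Hnc]]]; apply: Hnc.
pose K := Rdefinitions.R.
pose cx (x : 'rV[K]_d) := [set i | 0 < fv H i x].
have cxC : forall x, X x -> cx x \in C.
  move=> x Xx; apply/code; exists x; split => //; split.
    by move=> i; rewrite inE.
  by move=> j; rewrite inE => /negP h1 h2; apply: h1.
have Cx : forall s, s \in C -> exists x, X x /\ s = cx x.
  move=> s /code [x [Xx [h1 h2]]]; exists x; split => //; apply/setP => i; rewrite inE.
  case: (boolP (i \in s)) => iis; first by have := h1 i iis.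
  by apply/esym/negP => h; apply: (h2 i iis).
pose F i x := sgb K (i \in g) * fv H i x.
pose Y := fun x => X x /\ forall i, i \in tau -> 0 < F i x.
have Faff : forall i, affineP (F i).
  by move=> i x y t; rewrite /F /fv !dotv_aff; ring.
have Xconv : convexP X by move=> x y t Xx Xy t0 t1; apply: st.1.2.
have Yconv : convexP Y.
  move=> x y t [Xx Fx] [Xy Fy] t0 t1; split; first exact: Xconv.
  by move=> i it; rewrite Faff; apply: conv_pos => //; [apply: Fx|apply: Fy].
have inflipF : forall x i, 0 < F i x -> i \in Defs.flip g (cx x).
  by move=> x i h; rewrite in_flip inE; apply: fkey2.
have inflipF2 : forall x i, i \in Defs.flip g (cx x) -> fv H i x != 0 -> 0 < F i x.
  by move=> x i; rewrite in_flip inE => h f0; rewrite /F -fkey.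
have -> : link tau (Delta (flip_code g C)) = hnerve Y F (~: tau).
  apply/setP => v; rewrite !inE; apply/idP/idP.
    move=> /andP[_ /andP[dj /existsP [s /andP [/imsetP [s0 s0C ->] vts]]]].
    have [x [Xx s0x]] := Cx s0 s0C; subst s0.
    have [x' [Xx' hx']] := perturb (e := fun i => sgb K (i \in g)) st Xx (fun i => sgb_neq0 K _).
    have key : forall i, i \in v :|: tau -> 0 < F i x'.
      move=> i ivt; have ifl := subsetP vts i ivt; case: (hx' i) => h1 h2.
      case: (eqVneq (fv H i x) 0) => [f0|f0]; first exact: h2.
      exact: (sgb_prod (h1 f0) (inflipF2 _ _ ifl f0)).
    apply/andP; split; first by rewrite -disjoints_subset.
    apply/asboolP; exists x'; split.
      by split => // i it; apply: key; rewrite inE it orbT.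
    by move=> i iv; apply: key; rewrite inE iv.
  move=> /andP[vt /asboolP [y [[Xy Fty] Fvy]]].
  have vts : v :|: tau \subset Defs.flip g (cx y).
    apply/subsetP => i; rewrite inE => /orP[iv|it]; apply: inflipF; [exact: Fvy|exact: Fty].
  have sF : Defs.flip g (cx y) \in flip_code g C by apply/imsetP; exists (cx y) => //; apply: cxC.
  apply/and3P; split.
  - apply/existsP; exists (Defs.flip g (cx y)); rewrite sF /=; apply: subset_trans vts.
    exact: subsetUl.
  - by rewrite disjoints_subset.
  - by apply/existsP; exists (Defs.flip g (cx y)); rewrite sF.
apply: hnerve_collapsible => // y [Xy Fty].
apply: contrapT => ncov.
have hne : forall i, - sgb K (i \in g) != 0 by move=> i; rewrite oppr_eq0 sgb_neq0.
have [y' [Xy' hy']] := perturb (e := fun i => - sgb K (i \in g)) st Xy hne.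
have hF : forall i, (i \in tau -> 0 < F i y') /\ (i \notin tau -> F i y' < 0).
  move=> i; case: (hy' i) => h1 h2; split => it.
    have Fi := Fty i it; have f0 : fv H i y != 0.
      by apply/negP => /eqP f0; move: Fi; rewrite /F f0 mulr0 ltxx.
    exact: (sgb_prod (h1 f0) Fi).
  have Fle : F i y <= 0.
    rewrite leNgt; apply/negP => Fi; apply: ncov; exists i => //; by rewrite inE.
  case: (eqVneq (fv H i y) 0) => [f0|f0].
    have := h2 f0; rewrite /F; lra.
  have Flt : F i y < 0.
    rewrite lt_neqAle Fle andbT; apply/negP => /eqP F0; move: F0; rewrite /F => /eqP.
    by rewrite mulf_eq0 (negbTE (sgb_neq0 K _)) (negbTE f0).
  exact: (sgb_prod_neg (h1 f0) Flt).
apply/negP: Htau; rewrite negbK; apply/imsetP; exists (cx y'); first exact: cxC.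
apply/setP => i; case: (hF i) => h1 h2; case: (boolP (i \in tau)) => it.
  by rewrite (inflipF _ _ (h1 it)).
apply/esym/negP => ifl; have Fn := h2 it.
have f0 : fv H i y' != 0.
  by apply/negP => /eqP f0; move: Fn; rewrite /F f0 mulr0 ltxx.
have := inflipF2 _ _ ifl f0; lra.
Qed.
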